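(* Let $\tau$ be the usual topology on $\mathbb{R}$ and let $\rho=\{U\setminus E : U\in\tau,\ E\subseteq\mathbb{R}\text{ countable}\}$. Then $(\mathbb{R},\rho)$ is a topological space that is Hausdorff, not regular, Menger and totally Lindelöf, but is not an Alster space.
   Context: A filter base on a set $X$ is a nonempty family $\mathcal{F}\subseteq\mathcal{P}(X)$ with $\emptyset\notin\mathcal{F}$ and closed under pairwise intersections. It is stable under countable intersections if for every countable $S\subseteq\mathcal{F}$ there is $H\in\mathcal{F}$ with $H\subseteq\bigcap S$. $ad(\mathcal{F})=\bigcap\{\overline{F}:F\in\mathcal{F}\}$. A filter base $\mathcal{F}$ on $X$ is total if every filter base $\mathcal{H}\supseteq\mathcal{F}$ satisfies $ad(\mathcal{H})\neq\emptyset$. $X$ is totally Lindelöf if every filter base stable under countable intersections is contained in a total filter base stable under countable intersections. An Alster covering of $X$ is a family of $G_\delta$ subsets of $X$ (countable intersections of open sets) such that every compact subset of $X$ is contained in one of its members; $X$ is Alster if every Alster covering has a countable subcover. $X$ is Menger if for every sequence $\langle\mathcal{A}_n:n<\omega\rangle$ of open covers of $X$ there are finite $\mathcal{C}_n\subseteq\mathcal{A}_n$ with $\bigcup_n\bigcup\mathcal{C}_n=X$. *)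

(* Defs.v *)
From HB Require Import structures.
From mathcomp Require Import all_boot all_order all_algebra.
From mathcomp Require Import all_classical all_reals topology normedtype.
Set Implicit Arguments. Unset Strict Implicit. Unset Printing Implicit Defensive.
Import Order.TTheory GRing.Theory Num.Theory.
Import numFieldTopology.Exports.
Local Open Scope classical_set_scope.

Section GenTop.
Variable T : Type.
Variable op : set (set T).
Implicit Types (A B K : set T) (C D F S : set (set T)).

Definition is_topology : Prop :=
  [/\ op setT, op set0,
      (forall A B, op A -> op B -> op (A `&` B)) &
      (forall C, C `<=` op -> op (\bigcup_(A in C) A))].

Definition closure_in A : set T :=
  [set x | forall U, op U -> U x -> U `&` A !=set0].

Definition closed_in A : Prop := op (~` A).

Definition hausdorff_in : Prop :=
  forall x y : T, x <> y ->
    exists U V, [/\ op U, op V, U x, V y & U `&` V = set0].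

Definition regular_in : Prop :=
  forall (x : T) A, closed_in A -> ~ A x ->
    exists U V, [/\ op U, op V, U x, A `<=` V & U `&` V = set0].

Definition open_cover C : Prop := C `<=` op /\ setT `<=` \bigcup_(A in C) A.

Definition compact_in K : Prop :=
  forall C, C `<=` op -> K `<=` \bigcup_(A in C) A ->
    exists D, [/\ D `<=` C, finite_set D & K `<=` \bigcup_(A in D) A].

Definition menger_in : Prop :=
  forall A : nat -> set (set T), (forall n, open_cover (A n)) ->
    exists Cn : nat -> set (set T),
      (forall n, Cn n `<=` A n /\ finite_set (Cn n)) /\
      setT `<=` \bigcup_n \bigcup_(B in Cn n) B.

Definition Gdelta_in (G : set T) : Prop :=
  exists V : nat -> set T, (forall n, op (V n)) /\ G = \bigcap_n V n.

Definition alster_cover C : Prop :=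
  (forall G : set T, C G -> Gdelta_in G) /\
  (forall K, compact_in K -> exists G : set T, C G /\ K `<=` G).

Definition alster_in : Prop :=
  forall C, alster_cover C ->
    exists D, [/\ D `<=` C, countable D & setT `<=` \bigcup_(A in D) A].

Definition filter_base F : Prop :=
  [/\ F !=set0, ~ F set0 & forall A B, F A -> F B -> F (A `&` B)].

Definition countably_stable F : Prop :=
  forall S, S `<=` F -> countable S ->
    exists W : set T, F W /\ W `<=` \bigcap_(A in S) A.

Definition adherence F : set T := \bigcap_(A in F) closure_in A.

Definition total_in F : Prop :=
  forall H : set (set T), filter_base H -> F `<=` H -> adherence H !=set0.

Definition totally_lindelof_in : Prop :=
  forall F, filter_base F -> countably_stable F ->
    exists G : set (set T), [/\ filter_base G, countably_stable G, total_in G & F `<=` G].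

End GenTop.

Definition rho (R : realType) : set (set R) :=
  fun A => exists U E : set R, [/\ open U, countable E & A = U `\` E].

(* Main.v *)
Require Import Defs.
From mathcomp Require Import all_boot all_order all_algebra.
From mathcomp Require Import all_classical all_reals topology normedtype.
From mathcomp Require Import finmap signed measure lebesgue_measure lra.
Import Order.TTheory GRing.Theory Num.Theory.
Import numFieldTopology.Exports.
Local Open Scope classical_set_scope.
Local Open Scope ring_scope.

Set Implicit Arguments.
Section H.
Variable R : realType.
Implicit Types (A B U E : set R).

Lemma itv_uncountable (a b : R) : a < b -> ~ countable `]a, b[.
Proof.
move=> ab /countable_lebesgue_measure0.
rewrite lebesgue_measure_itv /=.
by rewrite lte_fin ab -EFinD => -[] /eqP; rewrite subr_eq0 gt_eqF.
Qed.

Lemma countable_sub T (A B : set T) : A `<=` B -> countable B -> countable A.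
Proof. by move=> AB; apply: sub_countable; apply: subset_card_le. Qed.

Lemma open_ball (U : set R) (x : R) : open U -> U x ->
  exists e : R, 0 < e /\ `]x - e, x + e[ `<=` U.
Proof.
move=> oU Ux.
have : nbhs x U by rewrite nbhsE /=; exists U.
rewrite -nbhs_ballE /nbhs_ball /nbhs_ball_ => -[_/posnumP[r] xrU].
by exists r%:num; split => //; rewrite -ball_itv.
Qed.

Lemma open_uncountable U x : open U -> U x -> ~ countable U.
Proof.
move=> oU Ux; have [e [e0 eU]] := @open_ball U x oU Ux.
move=> /(countable_sub eU); apply: itv_uncountable.
by rewrite ltrBlDr -addrA ltrDl addr_gt0.
Qed.

Lemma setT_uncountable : ~ countable (@setT R).
Proof. exact: (@open_uncountable setT 0 openT I). Qed.

Lemma uncountable_diff T (A E : set T) : ~ countable A -> countable E ->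
  exists x, A x /\ ~ E x.
Proof.
move=> nA cE; apply: contrapT => H; apply: nA; apply: countable_sub cE.
by move=> x Ax; apply: contrapT => nE; apply: H; exists x.
Qed.

Lemma countableU2 T (A B : set T) : countable A -> countable B -> countable (A `|` B).
Proof.
move=> cA cB; rewrite -bigcup2inE; apply: bigcup_countable => //.
by move=> [|[|]] //.
Qed.


Arguments countable_sub {T A B}.
Arguments open_ball {U x}.
Arguments open_uncountable {U x}.
Arguments uncountable_diff {T A E}.
Arguments countableU2 {T A B}.

Lemma rho_top : is_topology (@rho R).
Proof.
split.
- exists setT, set0; split; [exact: openT | done | by rewrite setD0].
- exists set0, set0; split; [exact: open0 | done | by rewrite set0D].
- move=> A B [U1 [E1 [o1 c1 ->]]] [U2 [E2 [o2 c2 ->]]].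
  exists (U1 `&` U2), (E1 `|` E2); split; [exact: openI | exact: countableU2 | ].
  apply/seteqP; split => x /=.
    by move=> [[? ?] [? ?]]; split => //; case.
  by move=> [[? ?] H]; split; split => // ?; apply: H; [left|right].
- move=> C CR.
  have [f Hf] : {f : set R -> (set R * set R)%type & forall A, rho A ->
      [/\ open (f A).1, countable (f A).2 & A = (f A).1 `\` (f A).2]}.
    apply: (@choice _ _ (fun A p => rho A ->
      [/\ open p.1, countable p.2 & A = p.1 `\` p.2])) => A.
    have [[U [E [oU cE eA]]]|nA] := pselect (rho A); first by exists (U, E).
    by exists (set0, set0).
  pose P (pq : (rat * rat)%type) := exists A, C A /\
     `]ratr pq.1, ratr pq.2[ `<=` (f A).1.
  have [h Hh] : {h : (rat * rat)%type -> set R & forall pq, P pq -> C (h pq) /\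
     `]ratr pq.1, ratr pq.2[ `<=` (f (h pq)).1}.
    apply: (@choice _ _ (fun pq A => P pq -> C A /\
      `]ratr pq.1, ratr pq.2[ `<=` (f A).1)) => pq.
    have [[A HA]|nP] := pselect (P pq); first by exists A.
    by exists set0.
  set Y := \bigcup_(A in C) A.
  set U := \bigcup_(A in C) (f A).1.
  exists U, (U `\` Y); split.
  + by apply: bigcup_open => A CA; case: (Hf A (CR A CA)).
  + apply: (@countable_sub _ _ (\bigcup_(pq in P) (f (h pq)).2)).
      move=> x [[A CA fAx] nY].
      have [oA _ eA] := Hf A (CR A CA).
      have [e [e0 eS]] := open_ball oA fAx.
      have /rat_in_itvoo[p pI] : x - e < x by rewrite ltrBlDr ltrDl.
      have /rat_in_itvoo[q qI] : x < x + e by rewrite ltrDl.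
      move: pI qI; rewrite !in_itv /= => /andP[p1 p2] /andP[q1 q2].
      have Ppq : P (p, q).
        exists A; split => //; apply: subset_trans eS => y /=.
        rewrite !in_itv /= => /andP[py yq].
        by apply/andP; split; [exact: (lt_trans p1 py) | exact: lt_trans yq q2].
      exists (p, q) => //.
      have [Ch sub] := Hh _ Ppq.
      have [_ _ eh] := Hf _ (CR _ Ch).
      apply: contrapT => ng; apply: nY; exists (h (p, q)) => //.
      rewrite eh; split => //; apply: sub => /=.
      by rewrite in_itv /= p2 q1.
    apply: bigcup_countable => // pq Ppq.
    by have [Ch _] := Hh _ Ppq; case: (Hf _ (CR _ Ch)).
  + rewrite /Y /U; apply/seteqP; split => x.
      move=> [A CA Ax]; split; last by move=> [_]; apply; exists A.
      have [_ _ eA] := Hf A (CR A CA).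
      by exists A => //; move: Ax; rewrite {1}eA; case.
    move=> [Ux H]; apply: contrapT => nY; apply: H; by split.
Qed.


Lemma open_rho (U : set R) : open U -> rho U.
Proof. by move=> oU; exists U, set0; split => //; rewrite setD0. Qed.

Lemma itvoo_open (a b : R) : open `]a, b[%classic.
Proof. exact: interval_open. Qed.

Lemma rho_haus : hausdorff_in (@rho R).
Proof.
have key : forall x y : R, x < y -> exists U V : set R,
    [/\ rho U, rho V, U x, V y & U `&` V = set0].
  move=> x y xy; pose m := (x + y) / 2.
  exists [set z | z < m], [set z | m < z]; split.
  - exact/open_rho/open_lt.
  - exact/open_rho/open_gt.
  - by rewrite /= /m midf_lt.
  - by rewrite /= /m midf_lt.
  - apply/seteqP; split => z //= [zm mz].
    by have := lt_trans zm mz; rewrite ltxx.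
move=> x y /eqP; rewrite neq_lt => /orP[xy|yx]; first exact: key.
have [U [V [rU rV Uy Vx UV]]] := key _ _ yx.
by exists V, U; split => //; rewrite setIC.
Qed.

Lemma rho_not_regular : ~ regular_in (@rho R).
Proof.
pose A := [set z : R | (exists r : rat, z = ratr r) /\ z != 0].
have cA : countable A.
  apply: (@countable_sub _ _ (ratr @` [set: rat])).
    by move=> z [[r ->] _]; exists r.
  exact: (sub_countable (card_image_le _ _)).
move=> /(_ 0 A) [].
- exists setT, A; split => //; first exact: openT.
  by apply/seteqP; split => z /=; [move=> nA; split | case].
- by case => _; rewrite eqxx.
move=> U [V [[U0 [E [oU0 cE ->]]] [V0 [E' [oV0 cE' ->]]] [U00 nE0] AV UV]].
have [e [e0 eU]] := open_ball oU0 U00.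
have /rat_in_itvoo[r rI] : 0 < e by [].
move: rI; rewrite in_itv /= => /andP[r0 re].
have Ar : A (ratr r) by split; [exists r | rewrite gt_eqF].
have [V0r _] := AV _ Ar.
have oW : open (V0 `&` `]-e, e[%classic) by apply: openI => //; exact: itvoo_open.
have Wr : (V0 `&` `]-e, e[%classic) (ratr r).
  split => //=; rewrite in_itv /= re andbT.
  by rewrite (lt_trans _ r0) // oppr_lt0.
have [z [[V0z zI] nEz]] := uncountable_diff (open_uncountable oW Wr) (countableU2 cE cE').
have : ((U0 `\` E) `&` (V0 `\` E')) z.
  split; split.
  - by apply: eU; rewrite sub0r add0r.
  - by move=> ?; apply: nEz; left.
  - by [].
  - by move=> ?; apply: nEz; right.
by rewrite UV.
Qed.


Lemma nonemptyP T (A : set T) : A <> set0 -> exists x, A x.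
Proof.
move=> nA; apply: contrapT => H; apply: nA; apply/seteqP; split => x //= Ax.
by apply: H; exists x.
Qed.

Lemma rho_tl : totally_lindelof_in (@rho R).
Proof.
move=> F [[A0 FA0] F0 FI] Fcs.
have [[c Hc]|nc] := pselect (exists c, forall A, F A -> A c).
  exists [set B | B c]; split.
  - split; [by exists setT | by [] | by move=> A B /= ? ?; split].
  - by move=> S SG _; exists [set c]; split => // x -> B /SG.
  - move=> H [_ H0 HI] GH; exists c => B HB U _ Uc; exists c; split => //.
    have Hc1 : H [set c] by apply: GH.
    have [x [Bx xc]] : exists x, (B `&` [set c]) x.
      by apply: nonemptyP => e; apply: H0; rewrite -e; exact: HI.
    by rewrite -xc.
  - by move=> A /Hc.
have {nc} nc : forall c, exists A, F A /\ ~ A c.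
  move=> c; apply: contrapT => H; apply: nc; exists c => A FA.
  by apply: contrapT => nAc; apply: H; exists A.
have [a Ha] := choice nc.
have nonempty_F : forall W, F W -> exists x, W x.
  by move=> W FW; apply: nonemptyP => W0; apply: F0; rewrite -W0.
have claim1 : forall A, F A -> ~ countable A.
  move=> W0 FW0 cW0.
  have [W [FW SW]] : exists W, F W /\ W `<=` \bigcap_(A in [set W0] `|` (a @` W0)) A.
  apply: Fcs.
  - by move=> B [->|[c _ <-]] //; case: (Ha c).
  - apply: countableU2; first exact: countable1.
    exact: (sub_countable (card_image_le _ _)).
  have [x Wx] := nonempty_F W FW.
  have W0x : W0 x by apply: (SW x Wx); left.
  by case: (Ha x) => _; apply; apply: (SW x Wx); right; exists x.
have [k Hk] : exists k : nat, forall A, F A ->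
    ~ countable (A `&` `[- k%:R, k%:R]%classic).
  apply: contrapT => H.
  have {}H : forall k : nat, exists A, F A /\
      countable (A `&` `[- k%:R, k%:R]%classic).
    move=> k; apply: contrapT => H1; apply: H; exists k => A FA cA.
    by apply: H1; exists A.
  have [b Hb] := choice H.
  have [W [FW SW]] : exists W, F W /\ W `<=` \bigcap_(A in range b) A.
  apply: Fcs.
  - by move=> B [k _ <-]; case: (Hb k).
  - exact: (sub_countable (card_image_le _ _)).
  apply: (claim1 W FW).
  apply: (@countable_sub _ _ (\bigcup_(k in [set: nat]) (b k `&` `[- k%:R, k%:R]%classic))).
    move=> x Wx; exists (Num.bound `|x|) => //; split.
      by apply: (SW x Wx); exists (Num.bound `|x|).
    have := archi_boundP (normr_ge0 x).
    by rewrite /= in_itv /= -ler_norml => /ltW.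
  by apply: bigcup_countable => // n _; case: (Hb n).
set I := `[- k%:R, k%:R]%classic : set R.
pose G := [set B | exists A E, [/\ F A, countable E & (A `&` I) `\` E `<=` B]].
have G0 : forall A E, F A -> countable E -> exists x, ((A `&` I) `\` E) x.
  move=> A E FA cE; have [x [? ?]] := uncountable_diff (Hk A FA) cE.
  by exists x.
have AIG : forall A E, F A -> countable E -> G ((A `&` I) `\` E).
  by move=> A E FA cE; exists A, E; split.
exists G; rewrite /G; split.
- split.
  + by exists A0, A0, set0; split => // x [[]].
  + move=> [A [E [FA cE sub]]]; have [x Hx] := G0 A E FA cE.
    exact: sub x Hx.
  + move=> B1 B2 [A1 [E1 [FA1 cE1 s1]]] [A2 [E2 [FA2 cE2 s2]]].
    exists (A1 `&` A2), (E1 `|` E2); split; [exact: FI | exact: countableU2 |].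
    move=> x [[[x1 x2] xI] nE]; split.
      by apply: s1; split; [split|] => // ?; apply: nE; left.
    by apply: s2; split; [split|] => // ?; apply: nE; right.
- move=> S SG cS.
  have [p Hp] : {p : set R -> (set R * set R)%type & forall B, G B ->
      [/\ F (p B).1, countable (p B).2 & ((p B).1 `&` I) `\` (p B).2 `<=` B]}.
    apply: (@choice _ _ (fun B q => G B ->
      [/\ F q.1, countable q.2 & (q.1 `&` I) `\` q.2 `<=` B])) => B.
    have [[A [E HAE]]|nB] := pselect (G B); first by exists (A, E).
    by exists (set0, set0).
  have [W [FW SW]] : exists W, F W /\ W `<=` \bigcap_(A in (fun B => (p B).1) @` S) A.
  apply: Fcs.
  - by move=> A [B SB <-]; case: (Hp B (SG B SB)).
  - exact: (sub_countable (card_image_le _ _)).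
  exists ((W `&` I) `\` \bigcup_(B in S) (p B).2); split.
    apply: AIG => //; apply: bigcup_countable => // B SB.
    by case: (Hp B (SG B SB)).
  move=> x [[Wx Ix] nE] B SB.
  have [_ _ sub] := Hp B (SG B SB).
  apply: sub; split; [split|] => //.
    by apply: (SW x Wx); exists B.
  by move=> ?; apply: nE; exists B.
- move=> H [_ H0 HI] GH.
  pose F' := filter_from H id.
  have fF' : Filter F'.
    apply: filter_from_filter; first by exists ((A0 `&` I) `\` set0); apply/GH/AIG.
    by move=> i j Hi Hj; exists (i `&` j) => //; apply: HI.
  have pF' : ProperFilter F'.
    apply: filter_from_proper => // i Hi; apply: nonemptyP => e.
    by apply: H0; rewrite -e.
  have F'I : F' I.
    by exists ((A0 `&` I) `\` set0); [apply/GH/AIG | move=> x [[]]].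
  have [p [Ip cp]] := segment_compact pF' F'I.
  exists p => B HB O [U0 [E [oU0 cE ->]]] [U0p nEp].
  have HB' : H (B `&` ((A0 `&` I) `\` E)) by apply: HI => //; apply/GH/AIG.
  have nU : nbhs p U0 by rewrite nbhsE /=; exists U0.
  have [z [[Bz [_ nEz]] U0z]] := cp _ _ (ex_intro2 _ _ _ HB' (fun x h => h)) nU.
  by exists z; split.
- by move=> A FA; exists A, set0; split => // x [[]].
Qed.


Lemma compact_finite (K : set R) : compact_in (@rho R) K -> finite_set K.
Proof.
move=> cK; apply: contrapT => inf.
have /card_subP [D DN DK] : ([set: nat] #<= K)%card by apply/infiniteP.
have cD : countable D by move: DN; rewrite card_eq_le => /andP[].
have iD : ~ finite_set D by rewrite (eq_finite_set DN); exact: infinite_nat.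
have [d Dd] : exists d, D d.
  by apply: nonemptyP => D0; apply: iD; rewrite D0.
pose C0 := [set O : set R | exists x, D x /\ O = ~` (D `\` [set x])].
have C0R : C0 `<=` @rho R.
  move=> O [x [_ ->]]; exists setT, (D `\` [set x]); split.
  - exact: openT.
  - by apply: countable_sub cD => z [].
  - by rewrite setTD.
have KC : K `<=` \bigcup_(O in C0) O.
  move=> y Ky; have [Dy|nDy] := pselect (D y).
    by exists (~` (D `\` [set y])); [exists y | move=> [_]; apply].
  by exists (~` (D `\` [set d])); [exists d | move=> [] /nDy].
have [D' [D'C fD' KD']] := cK C0 C0R KC.
have [g Hg] : {g : set R -> R & forall O, C0 O ->
      D (g O) /\ O = ~` (D `\` [set g O])}.
    apply: (@choice _ _ (fun O x => C0 O -> D x /\ O = ~` (D `\` [set x]))).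
    move=> O; have [[x Hx]|nO] := pselect (C0 O); first by exists x.
    by exists 0.
  apply: iD; apply: (@sub_finite_set _ _ (g @` D')); last exact: finite_image.
  move=> x Dx; have [O D'O Ox] := KD' x (DK x Dx).
  have [_ eO] := Hg O (D'C O D'O).
  exists O => //; apply: contrapT => ne; move: Ox; rewrite eO; apply.
  by split => // e; apply: ne; rewrite e.
Qed.


Lemma finite_Gdelta (K : set R) : finite_set K -> Gdelta_in (@rho R) K.
Proof.
move=> fK.
have cK : closed K.
  exact: ((@accessible_finite_set_closed R).1
     (hausdorff_accessible (@Rhausdorff R)) K fK).
pose e (n : nat) : R := (n.+1%:R)^-1.
have e0 : forall n, 0 < e n by move=> n; rewrite /e invr_gt0 ltr0n.
exists (fun n => \bigcup_(x in K) `]x - e n, x + e n[%classic); split.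
  move=> n; apply: open_rho; apply: bigcup_open => x _; exact: itvoo_open.
apply/seteqP; split => y.
  move=> Ky n _; exists y => //=; rewrite in_itv /=.
  by apply/andP; split; have := e0 n; lra.
move=> Hy; apply: contrapT => nKy.
have oC : open (~` K) by rewrite openC.
have [r [r0 rC]] := open_ball oC nKy.
pose n := Num.bound (r^-1).
have hn : r^-1 < n%:R by apply: archi_boundP; rewrite invr_ge0 ltW.
have enr : e n < r.
  rewrite /e -[r]invrK ltf_pV2 ?posrE ?invr_gt0 ?ltr0n //.
  by apply: (lt_le_trans hn); rewrite ler_nat.
have [x Kx] := Hy n I.
rewrite /= in_itv /= => /andP[h1 h2].
apply: (rC x) => //=; rewrite in_itv /=.
by apply/andP; split; lra.
Qed.

Lemma rho_not_alster : ~ alster_in (@rho R).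
Proof.
move=> /(_ [set G | Gdelta_in (@rho R) G /\ countable G]) [].
  split; first by move=> G [].
  move=> K /compact_finite fK; exists K; split => //; split.
  - exact: finite_Gdelta.
  - exact: finite_set_countable.
move=> D [DC cD TD]; apply: setT_uncountable.
apply: (@countable_sub _ _ (\bigcup_(A in D) A)) => //.
by apply: bigcup_countable => // A /DC [].
Qed.


Lemma rho_menger : menger_in (@rho R).
Proof.
move=> A HA.
have [f Hf] : {f : set R -> (set R * set R)%type & forall B, rho B ->
    [/\ open (f B).1, countable (f B).2 & B = (f B).1 `\` (f B).2]}.
  apply: (@choice _ _ (fun B p => rho B ->
    [/\ open p.1, countable p.2 & B = p.1 `\` p.2])) => B.
  have [[U [E [oU cE eA]]]|nA] := pselect (rho B); first by exists (U, E).
  by exists (set0, set0).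
have [b Hb] : {b : nat -> R -> set R & forall n x, A n (b n x) /\ b n x x}.
  apply: (@choice _ _ (fun n g => forall x, A n (g x) /\ g x x)) => n.
  have [g Hg] := @choice _ _ (fun x B => A n B /\ B x)
    (fun x => match (HA n).2 x I with ex_intro2 B AB Bx => ex_intro _ B (conj AB Bx) end).
  by exists g.
have Hbn : forall n x, [/\ open (f (b n x)).1, countable (f (b n x)).2 &
    b n x = (f (b n x)).1 `\` (f (b n x)).2].
  by move=> n x; apply: Hf; apply: (HA n).1; case: (Hb n x).
have [X HX] : {X : nat -> {fset R} & forall n,
    `[- n%:R, n%:R]%classic `<=` \bigcup_(x in [set` X n]) (f (b n x)).1}.
  apply: (@choice _ _ (fun n (Y : {fset R}) =>
    `[- n%:R, n%:R]%classic `<=` \bigcup_(x in [set` Y]) (f (b n x)).1)) => n.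
  have := @segment_compact R (- n%:R) n%:R; rewrite compact_cover.
  move=> /(_ R setT (fun x => (f (b n x)).1)) [].
  - by move=> x _; case: (Hbn n x).
  - move=> y _; exists y => //.
    have [_ _ e] := Hbn n y; have [_ byy] := Hb n y.
    by move: byy; rewrite {1}e => -[].
  by move=> Y _ HY; exists Y.
pose L := \bigcup_(n in [set: nat]) \bigcup_(x in [set` X n]) (f (b n x)).2.
have cL : countable L.
  apply: bigcup_countable => // n _; apply: bigcup_countable.
    exact: finite_set_countable.
  by move=> x _; case: (Hbn n x).
have /countable_injP [g ginj] := cL.
exists (fun n => (b n) @` [set` X n] `|` (b n) @` [set y | L y /\ g y = n]).
split.
  move=> n; split.
    by move=> B [[x _ <-]|[x _ <-]]; case: (Hb n x).
  rewrite finite_setU; split; first exact: finite_image.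
  apply: finite_image.
  have [[y0 [Ly0 gy0]]|ne] := pselect (exists y, L y /\ g y = n).
    apply: (@sub_finite_set _ _ [set y0]); last exact: finite_set1.
    move=> y [Ly gy] /=; apply: ginj; [exact: mem_set | exact: mem_set |].
    by rewrite gy gy0.
  apply: (@sub_finite_set _ _ set0) => // y [Ly gy]; apply: ne; exists y.
  by split.
move=> y _.
have hk := archi_boundP (normr_ge0 y).
set k := Num.bound `|y| in hk.
have Iy : `[- k%:R, k%:R]%classic y.
  by rewrite /= in_itv /= -ler_norml ltW.
have [x Xx cx] := HX k y Iy.
have [Ly|nLy] := pselect (L y).
  exists (g y) => //; exists (b (g y) y); last by case: (Hb (g y) y).
  by right; exists y.
exists k => //; exists (b k x); first by left; exists x.
have [_ _ e] := Hbn k x; rewrite e; split => // Ey.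
by apply: nLy; exists k => //; exists x.
Qed.

End H.

Unset Implicit Arguments.

Theorem theorem3p1 (R : realType) :
  is_topology (@rho R) /\ hausdorff_in (@rho R) /\ ~ regular_in (@rho R) /\
  menger_in (@rho R) /\ totally_lindelof_in (@rho R) /\ ~ alster_in (@rho R).
Proof.
split; first exact: rho_top.
split; first exact: rho_haus.
split; first exact: rho_not_regular.
split; first exact: rho_menger.
split; first exact: rho_tl.
exact: rho_not_alster.
Qed.
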